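(* Let $\phi(w)=aw+b$ with $a>0$ and $b\in\mathbb{C}$, $\mathrm{Re}(b)\geq 0$, and suppose that either $a=1$ ($\phi$ is of parabolic type or the identity map) or $a\in(1,\infty)$ ($\phi$ is hyperbolic of type II). Then the composition operator $C_{\phi}f=f\circ\phi$ on $H^2(\mathbb{C}_{+})$ is neither positively expansive nor uniformly positively expansive.
   Context: $\mathbb{C}_{+}=\{w\in\mathbb{C}:\mathrm{Re}(w)>0\}$. $H^2(\mathbb{C}_{+})$ is the Hardy space of holomorphic $f$ on $\mathbb{C}_{+}$ with finite norm $\|f\|_2^2=\sup_{0<x<\infty}\frac{1}{\pi}\int_{-\infty}^{\infty}|f(x+iy)|^2\,dy$; $C_\phi$ is bounded on it. An operator $T$ on a Banach space $X$ with unit sphere $S_X$ is positively expansive if for every $z\in S_X$ there is $n\in\mathbb{N}$ with $\|T^nz\|\ge 2$, and uniformly positively expansive if there is $n\in\mathbb{N}$ with $\|T^nz\|\ge2$ for all $z\in S_X$. *)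

(* Defs.v *)
From Stdlib Require Import Reals.
From Coquelicot Require Complex Hierarchy Derive.
From mathcomp Require Import all_boot all_order all_algebra.
From mathcomp Require Import all_classical all_reals all_analysis.
From mathcomp Require Import Rstruct Rstruct_topology.

(* Complex numbers: Coquelicot's C = R * R, with C = (Re, Im). *)
Definition CC := Complex.C.

Definition in_rhp (w : CC) : Prop := (0 < fst w)%R.

Definition holomorphic_rhp (f : CC -> CC) : Prop :=
  forall z : CC, in_rhp z ->
    Derive.ex_derive (K := Complex.C_AbsRing) (V := Complex.C_NormedModule) f z.

Definition H2norm2 (f : CC -> CC) : \bar R :=
  ereal_sup [set ((1 / PI)%R%:E *
                  \int[@lebesgue_measure R]_(y in setT)
                     ((Complex.Cmod (f (x, y)) ^+ 2)%R)%:E)%E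
            | x in [set x : R | (0 < x)%R]].

Definition in_H2 (f : CC -> CC) : Prop :=
  holomorphic_rhp f /\ (H2norm2 f < +oo)%E.

(* The Hardy norm ||f||_2 (meaningful for f in H^2). *)
Definition H2norm (f : CC -> CC) : R := sqrt (fine (H2norm2 f)).

Definition affine_map (a : R) (b : CC) (w : CC) : CC :=
  Complex.Cplus (Complex.Cmult (Complex.RtoC a) w) b.

Definition comp_op (phi : CC -> CC) (f : CC -> CC) : CC -> CC :=
  fun w => f (phi w).

Definition positively_expansive (T : (CC -> CC) -> (CC -> CC)) : Prop :=
  forall f : CC -> CC, in_H2 f -> H2norm f = 1%R ->
    exists n : nat, (1 <= n)%N /\ (2 <= H2norm (iter n T f))%R.

Definition uniformly_positively_expansive (T : (CC -> CC) -> (CC -> CC)) : Prop :=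
  exists n : nat, (1 <= n)%N /\
    forall f : CC -> CC, in_H2 f -> H2norm f = 1%R ->
      (2 <= H2norm (iter n T f))%R.

(* Submission.v *)
Require Import Defs.
From Stdlib Require Import Reals.
From Coquelicot Require Complex.
From Stdlib Require Import Lra.
From Coquelicot Require Coquelicot.

Module Holo.
Import Coquelicot.Coquelicot.
Local Open Scope R_scope.

Lemma Cinv_holo (K z : C) : Cplus z 1 <> 0%C ->
  ex_derive (K := C_AbsRing) (V := C_NormedModule) (fun w => Cmult K (Cinv (Cplus w 1))) z.
Proof.
intros Hc.
set (c := Cplus z 1) in *.
exists (Copp (Cmult K (Cinv (Cmult c c)))).
split; [apply is_linear_scal_l|].
intros x Hx. pose proof (@is_filter_lim_locally_unique C_AbsRing (AbsRing_NormedModule C_AbsRing) z x Hx) as Hx2. clear Hx. subst x.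
intros eps.
assert (Hm : 0 < Cmod c) by (apply Cmod_gt_0; exact Hc).
assert (HK : 0 < Cmod K + 1) by (pose proof (Cmod_ge_0 K); lra).
set (d := Rmin (Cmod c / 2) (eps * (Cmod c * Cmod c * Cmod c) / (2 * (Cmod K + 1)))).
assert (Hd : 0 < d).
{ unfold d. apply Rmin_pos. lra. destruct eps as [e He]; simpl.
  apply Rdiv_lt_0_compat; [|lra]. apply Rmult_lt_0_compat; [exact He|].
  apply Rmult_lt_0_compat; [|exact Hm]. apply Rmult_lt_0_compat; exact Hm. }
apply filter_imp with (P := @ball_norm C_AbsRing (AbsRing_NormedModule C_AbsRing) z (mkposreal d Hd)); [|apply (@locally_ball_norm C_AbsRing (AbsRing_NormedModule C_AbsRing))].
intros y Hy. unfold ball_norm in Hy. change (Cmod (Cminus y z) < d) in Hy.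
change (Cmod (Cminus (Cminus (Cmult K (Cinv (Cplus y 1))) (Cmult K (Cinv (Cplus z 1)))) (Cmult (Cminus y z) (Copp (Cmult K (Cinv (Cmult c c)))))) <= eps * Cmod (Cminus y z)).
set (h := Cminus y z) in *.
assert (Hy1 : Cplus y 1 = Cplus c h) by (unfold c, h; ring).
assert (Hh1 : Cmod h <= Cmod c / 2) by (pose proof (Rmin_l (Cmod c / 2) (eps * (Cmod c * Cmod c * Cmod c) / (2 * (Cmod K + 1)))); fold d in H; lra).
assert (Hh2 : Cmod h <= eps * (Cmod c * Cmod c * Cmod c) / (2 * (Cmod K + 1))) by (pose proof (Rmin_r (Cmod c / 2) (eps * (Cmod c * Cmod c * Cmod c) / (2 * (Cmod K + 1)))); fold d in H; lra).
assert (Hyb : Cmod c / 2 <= Cmod (Cplus y 1)).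
{ rewrite Hy1. pose proof (Cmod_triangle (Cplus c h) (Copp h)).
  replace (Cplus (Cplus c h) (Copp h)) with c in H by ring.
  rewrite Cmod_opp in H. lra. }
assert (Hy0 : Cplus y 1 <> 0%C).
{ intro E. rewrite E, Cmod_0 in Hyb. lra. }
fold c.
replace (Cminus (Cminus (Cmult K (Cinv (Cplus y 1))) (Cmult K (Cinv c))) (Cmult h (Copp (Cmult K (Cinv (Cmult c c))))))
  with (Cmult K (Cmult (Cmult h h) (Cinv (Cmult (Cmult c c) (Cplus y 1))))).
2:{ rewrite Hy1 in *. field. split; assumption. }
rewrite Cmod_mult, Cmod_mult, Cmod_mult, Cmod_inv, !Cmod_mult.
2:{ apply Cmult_neq_0; [apply Cmult_neq_0; assumption|assumption]. }
assert (HY : 0 < Cmod (Cplus y 1)) by lra.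
assert (Hh0 : 0 <= Cmod h) by apply Cmod_ge_0.
assert (HK0 : 0 <= Cmod K) by apply Cmod_ge_0.
assert (HP : 0 < Cmod c * Cmod c * Cmod (Cplus y 1)) by (apply Rmult_lt_0_compat; [apply Rmult_lt_0_compat|]; lra).
apply (Rmult_le_reg_r (Cmod c * Cmod c * Cmod (Cplus y 1))); [exact HP|].
replace (Cmod K * (Cmod h * Cmod h * / (Cmod c * Cmod c * Cmod (Cplus y 1))) * (Cmod c * Cmod c * Cmod (Cplus y 1)))
  with (Cmod K * Cmod h * Cmod h) by (field; lra).
destruct eps as [e He]; simpl in *.
assert (H1 : (Cmod K + 1) * Cmod h <= e * (Cmod c * Cmod c * Cmod c) / 2).
{ apply (Rmult_le_compat_l (Cmod K + 1)) in Hh2; [|lra].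
  replace ((Cmod K + 1) * (e * (Cmod c * Cmod c * Cmod c) / (2 * (Cmod K + 1)))) with (e * (Cmod c * Cmod c * Cmod c) / 2) in Hh2 by (field; lra).
  exact Hh2. }
assert (H2 : e * (Cmod c * Cmod c * (Cmod c / 2)) <= e * (Cmod c * Cmod c * Cmod (Cplus y 1))).
{ apply Rmult_le_compat_l; [lra|]. apply Rmult_le_compat_l; nra. }
nra.
Qed.

End Holo.


Module CL.
Import Coquelicot.Coquelicot.
Local Open Scope R_scope.

Definition ff (k : R) (w : C) : C := Cmult (RtoC k) (Cinv (Cplus w (RtoC 1))).

Lemma Cmod_sq (z : C) : Cmod z * Cmod z = fst z * fst z + snd z * snd z.
Proof.
unfold Cmod. rewrite sqrt_sqrt; [simpl; ring|]. simpl.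
pose proof (pow2_ge_0 (fst z)); pose proof (pow2_ge_0 (snd z)); lra.
Qed.

Lemma ff_mod (k u v : R) : 0 < u + 1 ->
  Cmod (ff k (u, v)) * Cmod (ff k (u, v)) = k * k * / ((u + 1) * (u + 1) + v * v).
Proof.
intros Hu. unfold ff.
assert (Hn : Cplus (u, v) (RtoC 1) <> RtoC 0).
{ intro E. injection E. intros. lra. }
rewrite Cmod_mult, Cmod_inv by exact Hn.
replace (Cmod (RtoC k) * / Cmod (Cplus (u, v) (RtoC 1)) * (Cmod (RtoC k) * / Cmod (Cplus (u, v) (RtoC 1))))
  with ((Cmod (RtoC k) * Cmod (RtoC k)) * / (Cmod (Cplus (u, v) (RtoC 1)) * Cmod (Cplus (u, v) (RtoC 1)))).
2:{ assert (0 < Cmod (Cplus (u, v) (RtoC 1))) by (apply Cmod_gt_0; exact Hn). field. lra. }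
rewrite !Cmod_sq. simpl. rewrite !Rmult_0_l, !Rplus_0_r. reflexivity.
Qed.

Lemma aff_eq (A p q x y : R) : affine_map A (p, q) (x, y) = (A * x + p, A * y + q).
Proof. unfold affine_map, Cplus, Cmult, RtoC; simpl. rewrite !Rmult_0_l, Rminus_0_r, Rplus_0_r. reflexivity. Qed.

Lemma aff_comp (A a : R) (B b w : C) :
  affine_map A B (affine_map a b w) = affine_map (A * a) (Cplus (Cmult (RtoC A) b) B) w.
Proof. destruct B, b, w. unfold affine_map, Cplus, Cmult, RtoC; simpl. apply injective_projections; simpl; ring. Qed.

Lemma aff_id (w : C) : affine_map 1 (RtoC 0) w = w.
Proof. destruct w. unfold affine_map, Cplus, Cmult, RtoC; simpl. apply injective_projections; simpl; ring. Qed.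

Lemma aff_re (A : R) (b B : C) : fst (Cplus (Cmult (RtoC A) b) B) = A * fst b + fst B.
Proof. destruct b, B; simpl. ring. Qed.

Lemma ff_holo (k : R) (z : C) : 0 < fst z ->
  Derive.ex_derive (K := Complex.C_AbsRing) (V := Complex.C_NormedModule) (ff k) z.
Proof.
intros Hz. apply Holo.Cinv_holo.
intro E. destruct z as [u v]. simpl in Hz. injection E. intros. lra.
Qed.

End CL.

From mathcomp Require Import all_boot all_order all_algebra.
From mathcomp Require Import all_classical all_reals all_analysis.
From mathcomp Require Import Rstruct Rstruct_topology.
From mathcomp Require Import ring lra measurable_realfun ftc trigo lebesgue_integral.

Module Ints.
Import Order.TTheory GRing.Theory Num.Theory.
Import numFieldNormedType.Exports.
Local Open Scope classical_set_scope.
Local Open Scope ring_scope.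
Section Ints.
Variable R : realType.
Let mu := @lebesgue_measure R.

Lemma int_oneDsqrT :
  (\int[mu]_(x in [set: R]) ((1 + x ^+ 2)^-1)%:E = pi%:E)%E.
Proof.
have -> : [set: R] = `]-oo, 0] `|` `]0, +oo[.
  apply/seteqP; split => x //= _; rewrite !in_itv /= andbT.
  by have [h|h] := Order.TotalTheory.leP x 0; [left|right].
rewrite ge0_integral_setU //=; first last.
- rewrite disj_set2E; apply/eqP; rewrite -subset0 => x []/= /[!in_itv]/=.
  by rewrite andbT => h1 h2; move: h1; rewrite leNgt h2.
- by move=> x _; rewrite lee_fin invr_ge0 addr_ge0 // sqr_ge0.
- apply/measurable_EFinP; apply: measurable_funTS; apply: continuous_measurable_fun.
  exact: continuous_oneDsqrV.
rewrite integral_itv_obnd_cbnd; last first.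
  apply/measurable_EFinP; apply: measurable_funTS; apply: continuous_measurable_fun.
  exact: continuous_oneDsqrV.
have := @integral0y_oneDsqr R; rewrite /oneDsqr => ->.
rewrite -oppr0 ge0_integration_by_substitutionNy; last 2 first.
- apply: continuous_subspaceT => x; exact: continuous_oneDsqrV.
- by move=> x _; rewrite invr_ge0 addr_ge0 // sqr_ge0.
under eq_integral do rewrite /= sqrrN.
have := @integral0y_oneDsqr R; rewrite /oneDsqr => ->.
by rewrite -EFinD -splitr.
Qed.

Lemma int_key (c A d q : R) : 0 <= c -> 0 < A -> 0 < d ->
 (\int[mu]_(y in [set: R]) (c * (d ^+ 2 + (A * y + q) ^+ 2)^-1)%:E = (c * pi / (A * d))%:E)%E.
Proof.
move=> c0 A0 d0.
pose F := fun y : R => A / d * y + q / d.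
pose G := fun u : R => (1 + u ^+ 2)^-1.
have dF : forall y : R, is_derive y (1:R) F (A / d).
  move=> y; rewrite /F.
  by apply: is_derive_eq; rewrite addr0 /GRing.scale /= mulr1.
have F' : derive1 F = cst (A / d).
  by apply/funext => y; rewrite derive1E; apply: derive_val.
have := @increasing_ge0_integration_by_substitutionT R F G.
rewrite F'.
have H1 : {homo F : x y / x < y}.
  by move=> x y xy; rewrite /F ltrD2r ltr_pM2l // divr_gt0.
have H2 : continuous (cst (A / d) : R -> R) by move=> x; exact: cst_continuous.
have H3 : forall l : R, cvg ((cst l : R -> R) x @[x --> -oo]) by move=> l; exact: is_cvg_cst.
have H4 : forall l : R, cvg ((cst l : R -> R) x @[x --> +oo]) by move=> l; exact: is_cvg_cst.
have H5 : forall x, derivable F x 1 by move=> x; have := dF x; case. 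
have Ad : 0 < A / d by rewrite divr_gt0.
have key : forall M, A / d * ((M - q / d) * d / A) + q / d = M.
  move=> M; field; rewrite ?gt_eqF //.
have H6 : F x @[x --> -oo] --> -oo.
  apply/cvgrNyPle => M; exists ((M - q/d) * d / A); split; first exact: num_real.
  move=> x hx; rewrite /F -(key M) lerD2r ler_pM2l //; exact: ltW.
have H7 : F x @[x --> +oo] --> +oo.
  apply/cvgryPge => M; exists ((M - q/d) * d / A); split; first exact: num_real.
  move=> x hx; rewrite /F -(key M) lerD2r ler_pM2l //; exact: ltW.
have H8 : continuous G by move=> x; exact: continuous_oneDsqrV.
have H9 : forall x, 0 <= G x by move=> x; rewrite invr_ge0 addr_ge0 // sqr_ge0.
move=> /(_ H1 H2 (H3 _) (H4 _) H5 H6 H7 H8 H9).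
rewrite [X in X = _ -> _]int_oneDsqrT => E.
have pw : forall y : R, c * (d ^+ 2 + (A * y + q) ^+ 2)^-1 =
    c * d / (A * d ^+ 2) * ((1 + (A / d * y + q / d) ^+ 2)^-1 * (A / d)).
  move=> y.
  have u0 : d ^+ 2 + (A * y + q) ^+ 2 != 0.
    by rewrite gt_eqF // ltr_pwDl ?sqr_ge0 // exprn_gt0.
  field; rewrite u0 !gt_eqF //.
under eq_integral do rewrite pw EFinM.
rewrite ge0_integralZl //.
- have E' : (\int[mu]_(x in setT) (((1 + (A/d*x+q/d)^+2)^-1 * (A/d))%:E) = pi%:E)%E.
    by rewrite E; reflexivity.
  rewrite E' -EFinM; congr EFin; field; rewrite !gt_eqF //.
- apply/measurable_EFinP; apply: continuous_measurable_fun => x.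
  apply: (@continuousM _ _ ((G \o F)) (cst (A / d))); last exact: cst_continuous.
  apply: continuous_comp; last exact: H8.
  exact/differentiable_continuous/derivable1_diffP/H5.
- move=> x _; rewrite lee_fin mulr_ge0 //; [by rewrite invr_ge0 addr_ge0 // sqr_ge0 | exact: ltW].
- by rewrite lee_fin divr_ge0 // ?mulr_ge0 // ltW // mulr_gt0 // exprn_gt0.
Qed.

End Ints.
End Ints.

Module Main.
Import Order.TTheory GRing.Theory Num.Theory.
Local Open Scope ring_scope.

Definition c0 : R := GRing.mul PI (GRing.inv pi).

Lemma PI_gt0' : (0 : R) < PI. Proof. apply/RltP; exact: PI_RGT_0. Qed.

Lemma c0_gt0 : 0 < c0.
Proof. by rewrite /c0 divr_gt0 // ?PI_gt0' // pi_gt0. Qed.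

Definition k : R := sqrt c0.

Lemma kk : k * k = c0.
Proof. rewrite /k; apply: sqrt_sqrt; apply/RleP; exact: ltW c0_gt0. Qed.

Lemma elem (h : CC -> CC) (A p q x : R) : 1 <= A -> 0 <= p -> 0 < x ->
  (forall y, Complex.Cmod (h (x, y)) ^+ 2 = c0 * ((A * x + p + 1) ^+ 2 + (A * y + q) ^+ 2)^-1) ->
  ((1 / PI)%:E * \int[@lebesgue_measure R]_(y in setT) ((Complex.Cmod (h (x, y)) ^+ 2)%R)%:E)%E
  = (1 / (A * (A * x + p + 1)))%:E.
Proof.
move=> A1 p0 x0 hy.
have A0 : 0 < A by apply: lt_le_trans A1.
have d0 : 0 < A * x + p + 1.
  have : 0 < A * x by rewrite mulr_gt0.
  lra.
under eq_integral do rewrite hy.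
rewrite Ints.int_key //; last exact: ltW c0_gt0.
rewrite -EFinM; congr EFin; rewrite /c0.
have h1 := PI_gt0'; move: (pi_gt0 R); move: (@pi R) => P hP.
rewrite divfK ?gt_eqF // mulrA mul1r mulVf ?gt_eqF // mul1r.
Qed.

Lemma hy_aff (A p q x : R) : 1 <= A -> 0 <= p -> 0 < x ->
  forall y, Complex.Cmod (CL.ff k (affine_map A (p, q) (x, y))) ^+ 2 =
    c0 * ((A * x + p + 1) ^+ 2 + (A * y + q) ^+ 2)^-1.
Proof.
move=> A1 p0 x0 y.
have A0 : 0 < A by apply: lt_le_trans A1.
have d0 : 0 < A * x + p + 1.
  have : 0 < A * x by rewrite mulr_gt0.
  lra.
rewrite CL.aff_eq -kk.
have d0' : Rlt 0 (A * x + p + 1) by apply/RltP.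
exact: (CL.ff_mod k (A * x + p) (A * y + q) d0').
Qed.

Lemma norm_le1 (A p q : R) : 1 <= A -> 0 <= p ->
  (H2norm2 (fun w => CL.ff k (affine_map A (p, q) w)) <= 1%:E)%E.
Proof.
move=> A1 p0; rewrite /H2norm2; apply: ge_ereal_sup => _ [x /= x0 <-].
have hE := elem (fun w => CL.ff k (affine_map A (p, q) w)) A p q x A1 p0 x0 (hy_aff A p q x A1 p0 x0).
rewrite [X in (X <= _)%E](_ : _ = (1 / (A * (A * x + p + 1)))%:E); last exact: hE.
have A0 : 0 < A by apply: lt_le_trans A1.
have d1 : 1 <= A * x + p + 1.
  have : 0 < A * x by rewrite mulr_gt0.
  lra.
rewrite lee_fin ler_pdivrMr ?mul1r; last by rewrite mulr_gt0 // (lt_le_trans _ d1).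
by rewrite -[X in X <= _]mulr1 ler_pM.
Qed.

Definition f1 : CC -> CC := fun w => CL.ff k (affine_map 1 (0%R, 0%R) w).

Lemma f1E : f1 = CL.ff k.
Proof. by apply: funext => w; rewrite /f1 CL.aff_id. Qed.

Lemma f1_norm2 : H2norm2 f1 = 1%:E.
Proof.
have ub : (H2norm2 f1 <= 1%:E)%E by apply: norm_le1.
have lb : forall x : R, 0 < x -> ((1 / (1 * (1 * x + 0 + 1)))%:E <= H2norm2 f1)%E.
  move=> x x0; apply: ereal_sup_ubound; exists x => //=.
  have hE := elem f1 1 0 0 x (lexx _) (lexx _) x0 (hy_aff 1 0 0 x (lexx _) (lexx _) x0).
  exact: hE.
move: ub lb; case: (H2norm2 f1) => [r| |] ub lb.
- have r1 : r <= 1 by rewrite -lee_fin.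
  congr EFin; apply/eqP; rewrite eq_le r1 /=.
  rewrite leNgt; apply/negP => r1'.
  have x0 : 0 < (1 - r) / 2 by rewrite divr_gt0 // subr_gt0.
  have d0 : 0 < (1 - r) / 2 + 1 by rewrite ltr_pwDl.
  have := lb _ x0; rewrite lee_fin !mul1r addr0 -[X in X <= _]div1r ler_pdivrMr // => h.
  have : r * ((1 - r) / 2 + 1) < 1.
    have e : r * ((1 - r) / 2 + 1) = 1 - (1 - r) * (2 - r) / 2 by field.
    rewrite e ltrBlDr ltrDl divr_gt0 // mulr_gt0 // subr_gt0 //.
    by apply: lt_trans r1' _; rewrite ltr1n.
  by rewrite ltNge h.
- by rewrite leye_eq in ub.
- by have := lb 1 ltr01; rewrite leeNy_eq.
Qed.

Lemma f1_in_H2 : in_H2 f1 /\ H2norm f1 = 1%coqR.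
Proof.
split; [split|].
- rewrite f1E => z hz; apply: CL.ff_holo; apply/RltP; exact: hz.
- by rewrite f1_norm2 ltry.
- rewrite /H2norm f1_norm2 /=; exact: sqrt_1.
Qed.

Lemma H2norm_lt2 (g : CC -> CC) : (H2norm2 g <= 1%:E)%E -> H2norm g < 2.
Proof.
rewrite /H2norm; case: (H2norm2 g) => [r| |] /=.
- rewrite lee_fin => /RleP r1.
  have := sqrt_le_1_alt r 1 r1; rewrite sqrt_1 => /RleP h.
  by apply: le_lt_trans h _; rewrite ltr1n.
- by [].
- by move=> _; rewrite sqrt_0 ltr0n.
Qed.

Lemma iter_form (a : R) (b : CC) : 1 <= a -> 0 <= fst b -> forall n : nat,
  exists (A : R) (B : CC), 1 <= A /\ 0 <= fst B /\
    iter n (comp_op (affine_map a b)) f1 = (fun w => CL.ff k (affine_map A B w)).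
Proof.
move=> a1 b0; elim => [|n [A [B [A1 [B0 IH]]]]].
- by exists 1, (0%R, 0%R); split; [exact: lexx|split; [exact: lexx|]].
- exists (A * a), (Complex.Cplus (Complex.Cmult (Complex.RtoC A) b) B).
  split; first by rewrite -[1]mulr1 ler_pM.
  split.
    rewrite CL.aff_re; apply: addr_ge0 => //; apply: mulr_ge0 => //.
    by apply: le_trans A1.
  rewrite iterS IH; apply: funext => w; rewrite /comp_op CL.aff_comp //.
Qed.

Lemma iter_lt2 (a : R) (b : CC) : 1 <= a -> 0 <= fst b -> forall n : nat,
  H2norm (iter n (comp_op (affine_map a b)) f1) < 2.
Proof.
move=> a1 b0 n; have [A [[p q] [A1 [B0 ->]]]] := iter_form a b a1 b0 n.
apply: H2norm_lt2; exact: norm_le1.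
Qed.

End Main.

From Stdlib Require Import Reals.
From Coquelicot Require Complex.

Theorem proposition3p4 (a : R) (b : Complex.C) :
  (0 < a)%R -> (0 <= fst b)%R -> (a = 1%R \/ (1 < a)%R) ->
  ~ positively_expansive (comp_op (affine_map a b)) /\
  ~ uniformly_positively_expansive (comp_op (affine_map a b)).
Proof.
move=> a0 b0 ha.
have a1 : Rle 1 a.
  by case: ha => [->|h]; [apply: Rle_refl | apply: Rlt_le].
have A1 := introT RleP a1.
have B0 := introT RleP b0.
have [hf hn] := Main.f1_in_H2.
split.
- move=> PE; have [n [_ h2]] := PE _ hf hn.
  have := Main.iter_lt2 a b A1 B0 n; by rewrite Order.TotalTheory.ltNge h2.
- move=> [n [_ H]]; have h2 := H _ hf hn.
  have := Main.iter_lt2 a b A1 B0 n; by rewrite Order.TotalTheory.ltNge h2.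
Qed.
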